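(* If $|\Sigma|\ge3$, then the set $\mathtt{REV}$ of injective cellular automata is not closed in $(\mathtt{CA},\delta)$; that is, there is a sequence of injective CA converging in $\delta$ to a non-injective CA.
   Context: $\Sigma$ is a finite alphabet, $N(r)=[-r,r]$. A cellular automaton (CA) is a map $c:\Sigma^\mathbb{Z}\to\Sigma^\mathbb{Z}$ of the form $c(x)_i=F(x_{[i-r,i+r]})$ for a local function $F:\Sigma^{N(r)}\to\Sigma$. $\mathtt{CA}$ is the set of all CA, $\mathtt{REV}$ the injective ones. For $c,d\in\mathtt{CA}$ with common radius $r$, $D^c_d$ is the set of $w\in\Sigma^{N(r)}$ on which the local rules of $c$ and $d$ give different outputs, and $\delta(c,d)=|D^c_d|/|\Sigma|^{2r+1}$ (independent of $r$). *)

(* Defs.v *)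
From HB Require Import structures.
From mathcomp Require Import all_boot all_order all_algebra.
Set Implicit Arguments. Unset Strict Implicit. Unset Printing Implicit Defensive.
Import Order.TTheory GRing.Theory Num.Theory.

Definition config (S : finType) := int -> S.

(* Windows of radius r: functions N(r) = [-r, r] -> S, with position
   k : 'I_(2r+1) standing for offset k - r. *)
Definition window (S : finType) (r : nat) := {ffun 'I_(r.*2.+1) -> S}.

Record CA (S : finType) := MkCA {
  rad : nat;
  rule : window S rad -> S }.
Arguments rad {S} c.
Arguments rule {S} c w.

Definition glob (S : finType) (c : CA S) (x : config S) : config S :=
  fun i => rule c [ffun k : 'I_((rad c).*2.+1) => x (i + (k%:Z - (rad c)%:Z))%R].

(* Local function of c viewed at a radius R >= rad c (it ignores the outer
   cells of the window). *)
Definition lfun_at (S : finType) (c : CA S) {R : nat} (w : window S R) : S :=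
  rule c [ffun k : 'I_((rad c).*2.+1) => w (inord (k + (R - rad c)))].

Definition Dset (S : finType) (c d : CA S) : {set window S (maxn (rad c) (rad d))} :=
  [set w | lfun_at c w != lfun_at d w].

Definition delta (S : finType) (c d : CA S) : rat :=
  ((#|Dset c d|)%:R / (#|S| ^ (maxn (rad c) (rad d)).*2.+1)%:R)%R.

(* Main.v *)
Require Import Defs.
From HB Require Import structures.
From mathcomp Require Import all_boot all_order all_algebra zify.
From Stdlib Require Import FunctionalExtensionality.
Import Order.TTheory GRing.Theory Num.Theory.
Set Implicit Arguments. Unset Strict Implicit.

Definition flip (S : finType) (a b s : S) : S :=
  if s == a then b else if s == b then a else s.
Definition isab (S : finType) (a b s : S) : bool := (s == a) || (s == b).

Definition rulec (S : finType) (a b : S) (w : window S 1) : S :=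
  if w (inord 2) == b then flip a b (w (inord 1)) else w (inord 1).
Definition CAc (S : finType) (a b : S) : CA S := @MkCA S 1 (rulec a b).

Definition rulen (S : finType) (a b : S) n (w : window S n.+1) : S :=
  if (w (inord n.+2) == b) && [exists j : 'I_n.+1, ~~ isab a b (w (inord (n.+2 + j)))]
  then flip a b (w (inord n.+1)) else w (inord n.+1).
Definition CAn (S : finType) (a b : S) n : CA S := @MkCA S n.+1 (@rulen S a b n).

Lemma wget (S : finType) (r m : nat) (x : config S) (i : int) : m < r.*2.+1 ->
  [ffun k : 'I_(r.*2.+1) => x (i + (k%:Z - r%:Z))%R] (inord m) = x (i + (m%:Z - r%:Z))%R.
Proof. by move=> hm; rewrite ffunE inordK. Qed.

Lemma globc (S : finType) (a b : S) x i :
  glob (CAc a b) x i = if x (i + 1)%R == b then flip a b (x i) else x i.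
Proof.
rewrite /glob /= /rulec !wget //.
have -> : (i + (2%:Z - 1%:Z))%R = (i + 1)%R by lia.
by have -> : (i + (1%:Z - 1%:Z))%R = i by lia.
Qed.

Lemma globn (S : finType) (a b : S) n x i :
  glob (CAn a b n) x i =
  if (x (i + 1)%R == b) && [exists j : 'I_n.+1, ~~ isab a b (x (i + (j.+1)%:Z)%R)]
  then flip a b (x i) else x i.
Proof.
rewrite /glob /= /rulen !wget; last by rewrite -addnn; lia.
  have -> : (i + ((n.+2)%:Z - (n.+1)%:Z))%R = (i + 1)%R by lia.
  have -> : (i + ((n.+1)%:Z - (n.+1)%:Z))%R = i by lia.
  congr (if (_ && _) then _ else _).
  apply: eq_existsb => j; rewrite wget; last by have := ltn_ord j; rewrite -addnn; lia.
  by congr (~~ isab _ _ (x _)); lia.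
by rewrite -addnn; lia.
Qed.

Lemma flipK (S : finType) (a b : S) : a != b -> involutive (flip a b).
Proof.
move=> ab s; rewrite /flip; case: (eqVneq s a) => [->|sa].
  by rewrite eq_sym (negbTE ab) eqxx.
case: (eqVneq s b) => [->|sb]; first by rewrite eqxx.
by rewrite (negbTE sa) (negbTE sb).
Qed.

Lemma flip_inj (S : finType) (a b : S) : a != b -> injective (flip a b).
Proof. by move/flipK/inv_inj. Qed.

Lemma isab_flip (S : finType) (a b s : S) : isab a b (flip a b s) = isab a b s.
Proof.
rewrite /flip /isab; case: (s =P a) => [_|sa]; first by rewrite !eqxx orbT.
case: (s =P b) => [_|sb]; rewrite ?eqxx ?orbT //=.
by apply/negbTE; rewrite negb_or; apply/andP; split; apply/eqP.
Qed.

Lemma flip_nab (S : finType) (a b s : S) : ~~ isab a b s -> flip a b s = s.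
Proof. by rewrite /isab /flip negb_or => /andP[/negbTE-> /negbTE->]. Qed.

Lemma CAc_not_inj (S : finType) (a b : S) : a != b -> ~ injective (glob (CAc a b)).
Proof.
move=> ab inj.
have : (fun _ : int => a) = (fun _ => b).
  apply: inj; apply: functional_extensionality => i.
  have ba : (b == a) = false by rewrite eq_sym (negbTE ab).
  by rewrite !globc (negbTE ab) eqxx /flip ba eqxx.
by move/(congr1 (fun f => f 0%R)) => /eqP; rewrite (negbTE ab).
Qed.

Lemma CAn_inj (S : finType) (a b : S) n : a != b -> injective (glob (CAn a b n)).
Proof.
move=> ab x y Hxy.
have H i : glob (CAn a b n) x i = glob (CAn a b n) y i by rewrite Hxy.
have Hab i : isab a b (x i) = isab a b (y i).
  have ig z j : isab a b (glob (CAn a b n) z j) = isab a b (z j).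
    by rewrite globn; case: ifP; rewrite ?isab_flip.
  by rewrite -ig H ig.
have Hm i : ~~ isab a b (x i) -> x i = y i.
  move=> nx; have ny : ~~ isab a b (y i) by rewrite -Hab.
  by have := H i; rewrite !globn !flip_nab //; case: ifP; case: ifP.
have Hk : forall k, k <= n -> forall i, ~~ isab a b (x (i + (k.+1)%:Z)%R) -> x i = y i.
  elim=> [|k IH] kn i hx.
    have e1 : x (i + 1)%R = y (i + 1)%R by exact: Hm.
    have nb : x (i + 1)%R != b by move: hx; rewrite /isab negb_or => /andP[].
    by have := H i; rewrite !globn -e1 (negbTE nb).
  have e1 : x (i + 1)%R = y (i + 1)%R.
    apply: (IH (ltnW kn)).
    by have -> : (i + 1 + (k.+1)%:Z)%R = (i + (k.+2)%:Z)%R by lia.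
  have ex : [exists j : 'I_n.+1, ~~ isab a b (x (i + (j.+1)%:Z)%R)].
    by apply/existsP; exists (Ordinal (kn : k.+1 < n.+1)).
  have ey : [exists j : 'I_n.+1, ~~ isab a b (y (i + (j.+1)%:Z)%R)].
    by apply/existsP; exists (Ordinal (kn : k.+1 < n.+1)); rewrite /= -Hab.
  have := H i; rewrite !globn ex ey -e1 !andbT; case: ifP => // _.
  exact: flip_inj.
apply: functional_extensionality => i.
have := H i; rewrite !globn.
case: (boolP [exists j : 'I_n.+1, ~~ isab a b (x (i + (j.+1)%:Z)%R)]) => [/existsP[j hj] _|nex].
  by apply: (Hk j _ i hj); rewrite -ltnS.
have ney : ~~ [exists j : 'I_n.+1, ~~ isab a b (y (i + (j.+1)%:Z)%R)].
  by apply: contra nex => /existsP[j hj]; apply/existsP; exists j; rewrite Hab.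
by rewrite (negbTE ney) !andbF => ->.
Qed.



Lemma foldr_prod (T : finType) (f : T -> nat) : foldr muln 1 [seq f x | x : T] = \prod_(x : T) f x.
Proof.
have g (s : seq T) : foldr muln 1 (map f s) = \prod_(x <- s) f x.
  by elim: s => [|x s IH]; rewrite ?big_nil ?big_cons //= IH.
by rewrite /image_mem g big_enum.
Qed.

Lemma cardT (S : finType) (a b : S) n : a != b ->
  #|[set w : window S n.+1 | [forall k : 'I_((n.+1).*2.+1), (n.+2 <= k) ==> isab a b (w k)]]|
  = #|S| ^ n.+2 * 2 ^ n.+1.
Proof.
move=> ab.
pose F := fun k : 'I_((n.+1).*2.+1) => if n.+2 <= k then [pred s | isab a b s] else predT.
have -> : #|[set w : window S n.+1 | [forall k : 'I_((n.+1).*2.+1), (n.+2 <= k) ==> isab a b (w k)]]|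
   = #|(family F : simpl_pred (window S n.+1))|.
  apply: eq_card => w; rewrite inE; apply/forallP/familyP => /= h k; have := h k; rewrite /F;
  by case: ifP.
rewrite card_family foldr_prod.
rewrite (eq_bigr (fun k : 'I_((n.+1).*2.+1) => if n.+2 <= k then 2 else #|S|)); last first.
  move=> k _; rewrite /F; case: ifP => _; last by apply: eq_card => s.
  have -> : #|[pred s | isab a b s]| = #|pred2 a b| by apply: eq_card => s.
  by rewrite card2 ab.
rewrite -(big_mkord xpredT (fun k => if n.+2 <= k then 2 else #|S|)).
rewrite (big_cat_nat _ (n:=n.+2)) //=; last by rewrite -addnn; lia.
rewrite (@eq_big_nat _ _ _ 0 n.+2 _ (fun _ => #|S|)); last by move=> k /andP[_ h]; rewrite leqNgt h.
rewrite (@eq_big_nat _ _ _ n.+2 _ _ (fun _ => 2)); last by move=> k /andP[h _]; rewrite h.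
rewrite !prod_nat_const_nat; congr (_ * _); congr (_ ^ _); rewrite -addnn; lia.
Qed.

Lemma cardD (S : finType) (a b : S) n : a != b ->
  #|Dset (CAn a b n) (CAc a b)| <= #|S| ^ n.+2 * 2 ^ n.+1.
Proof.
move=> ab; rewrite -(cardT n ab); apply: subset_leq_card; apply/subsetP => w.
rewrite !inE /lfun_at /= /rulen /rulec.
have e1 : maxn n.+1 1 - n.+1 = 0 by lia.
have e2 : maxn n.+1 1 - 1 = n by lia.
rewrite e1 e2 !ffunE !inordK //; last by rewrite -addnn; lia.
rewrite !addn0 add1n.
case: (w (inord n.+2) == b); last by rewrite ?andFb eqxx.
  rewrite andTb; case: existsP => [_|nE]; first by rewrite eqxx.
  move=> _; apply/forallP => k; apply/implyP => hk.
  have hk2 : (k : nat) < n.+1.*2.+1 := ltn_ord k.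
  have hj : k - n.+2 < n.+1 by lia.
  apply: contraT => nk; exfalso; apply: nE; exists (Ordinal hj).
  rewrite ffunE /= inordK; last by lia.
  rewrite addn0.
  have -> : (inord (n.+2 + (k - n.+2)) : 'I_((n.+1).*2.+1)) = k.
    by apply: val_inj; rewrite /= inordK; lia.
  by [].
by lia.
Qed.

Lemma pow23 m : 2 ^ m * (m + 2) <= 2 * 3 ^ m.
Proof.
elim: m => [//|m IH]; rewrite !expnS.
move: IH; move: (2 ^ m) (3 ^ m) => A B; nia.
Qed.

Lemma natbound (S : finType) (a b : S) n : a != b -> 3 <= #|S| ->
  #|Dset (CAn a b n) (CAc a b)| * (n + 3) <= 2 * #|S| ^ (maxn n.+1 1).*2.+1.
Proof.
move=> ab hS.
move: (#|Dset (CAn a b n) (CAc a b)|) (cardD n ab) => Dc hD.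
have -> : (maxn n.+1 1).*2.+1 = n.+2 + n.+1 by lia.
apply: (leq_trans (leq_mul hD (leqnn _))).
have h1 := pow23 n.+1.
have h2 : 3 ^ n.+1 <= #|S| ^ n.+1 by rewrite leq_exp2r.
rewrite expnD; move: h1 h2; move: (#|S| ^ n.+2) (2 ^ n.+1) (3 ^ n.+1) (#|S| ^ n.+1) => A B C D.
move=> h1 h2.
have : B * (n.+1 + 2) * A <= 2 * C * A by rewrite leq_mul2r h1 orbT.
have : 2 * C * A <= 2 * D * A by rewrite leq_mul2r leq_mul2l h2 !orbT.
nia.
Qed.

Lemma deltabound (S : finType) (a b : S) n : a != b -> 3 <= #|S| ->
  (delta (CAn a b n) (CAc a b) <= 2%:R / (n + 3)%:R)%R.
Proof.
move=> ab hS; rewrite /delta.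
have hP : (0 < (#|S| ^ (maxn n.+1 1).*2.+1)%:R :> rat)%R.
  by rewrite ltr0n expn_gt0; apply/orP; left; lia.
have hn : (0 < (n + 3)%:R :> rat)%R by rewrite ltr0n; lia.
rewrite ler_pdivrMr // mulrAC ler_pdivlMr // -!natrM ler_nat.
exact: natbound.
Qed.
Unset Implicit Arguments.

Theorem mainTheorem9 (S : finType) (HS : 3 <= #|S|) :
  exists (cs : nat -> CA S) (c : CA S),
    (forall n, injective (glob (cs n))) /\
    ~ injective (glob c) /\
    (forall eps : rat, (0 < eps)%R ->
       exists N, forall n, N <= n -> (delta (cs n) c < eps)%R).
Proof.
have : 1 < #|S| by lia.
case/card_gt1P => a [b [_ _ ab]].
exists (CAn a b), (CAc a b); split; first by move=> n; apply: CAn_inj.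
split; first exact: CAc_not_inj.
move=> eps he.
exists (Num.bound (2%:R / eps)) => n hn.
apply: (Order.POrderTheory.le_lt_trans (deltabound n ab HS)).
have hn3 : (0 < (n + 3)%:R :> rat)%R by rewrite ltr0n; lia.
rewrite ltr_pdivrMr //.
have hb := archi_boundP (x := 2%:R / eps) (ltW (divr_gt0 (ltr0n _ 2) he)).
move: hb; rewrite ltr_pdivrMr // => hb.
apply: (Order.POrderTheory.lt_le_trans hb).
rewrite [X in (_ <= X)%R]mulrC ler_pM2r // ler_nat; lia.
Qed.
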